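(* Let $\mathcal N$ and $\mathcal M$ be quantum channels satisfying $s$-detailed balance with respect to $\rho_\beta$, and suppose $\mathbb V_{\rho_\beta}(\mathcal M)>0$. Let $\rho$ be an arbitrary initial state and $\epsilon,\eta>0$. Set $T_{burn}=t_{mix}(\eta)$ and let $K$ satisfy $K\ge\frac{2\mathbb V_{\rho_\beta}(\mathcal M)}{\epsilon^2\eta}\,t_{aut,K}$. Then the outcomes of the single-trajectory algorithm satisfy $$\Pr_\rho\left(\left|\frac1K\sum_{t=1}^Ke_t-\mathbb E_{\rho_\beta}(\mathcal M)\right|\ge\epsilon\right)\le2\eta.$$
   Context: $H$ is an $n$-qubit Hermitian operator, $\beta>0$, $\rho_\beta=e^{-\beta H}/\operatorname{tr}(e^{-\beta H})$. For a channel $\mathcal T(X)=\sum_uK_uXK_u^\dagger$, $\mathcal T^\dagger(X)=\sum_uK_u^\dagger XK_u$. $\langle A,B\rangle_s=\operatorname{tr}(A^\dagger\rho_\beta^{1-s}B\rho_\beta^s)$; $\mathcal T$ satisfies $s$-detailed balance if $\langle A,\mathcal T^\dagger(B)\rangle_s=\langle\mathcal T^\dagger(A),B\rangle_s$ for all $A,B$. $\mathcal M$ has Kraus operators $\{O_u\}_u$ indexed by finitely many real outcomes $u$; applied to a state it gives outcome $u$ with probability $\operatorname{tr}(O_u\rho O_u^\dagger)$ and post-state $\propto O_u\rho O_u^\dagger$. $\mathbb E_{\rho_\beta}(\mathcal M)=\sum_uu\operatorname{tr}(O_u\rho_\beta O_u^\dagger)$, $\mathbb V_{\rho_\beta}(\mathcal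 M)=\sum_u|u-\mathbb E_{\rho_\beta}(\mathcal M)|^2\operatorname{tr}(O_u\rho_\beta O_u^\dagger)$, $\widehat{\mathcal M}(X)=\sum_u(u-\mathbb E_{\rho_\beta}(\mathcal M))O_uXO_u^\dagger$, $\mathcal E=\mathcal M\circ\mathcal N\circ\mathcal M$, $\widehat{\mathcal E}=\mathcal M\circ\mathcal N\circ\widehat{\mathcal M}$, $\mathrm{Cor}_{\rho_\beta}(\mathcal E^t)=\operatorname{tr}(\widehat{\mathcal E}\circ\mathcal E^t\circ\widehat{\mathcal E}(\rho_\beta))$, $C(t)=\mathrm{Cor}_{\rho_\beta}(\mathcal E^t)/\mathbb V_{\rho_\beta}(\mathcal M)$, $t_{aut,K}=\frac12+\sum_{t=1}^K(1-\frac tK)C(t-1)$. Mixing time $t_{mix}(\eta)=\min\{t\in\mathbb N:\|\mathcal N^t(\sigma)-\rho_\beta\|_1\le\eta$ for all states $\sigma\}$. Single-trajectory algorithm with inputs $\mathcal N,\mathcal M,\rho,T_{burn},K$: apply $\mathcal N$ $T_{burn}$ times to $\rho$; then for $t=1,\dots,K$ apply $\mathcal M$ (record outcome $e_t$), then $\mathcal N$, then $\mathcal M$ (outcome discarded). $\Pr_\rho$ is probability over all outcomes of this process started from $\rho$. *)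

(* Defs.v *)
From HB Require Import structures.
From mathcomp Require Import all_boot all_order all_algebra.
From mathcomp Require Import complex.
From mathcomp Require Import reals sequences exp.

Set Implicit Arguments.
Unset Strict Implicit.
Unset Printing Implicit Defensive.

Import Order.TTheory GRing.Theory Num.Theory.
Local Open Scope ring_scope.
Local Open Scope sesquilinear_scope.

Section Quantum.
Variable R : realType.
Local Notation C := R[i].
Variable m : nat.
Local Notation Mx := 'M[C]_m.

Definition rC (x : R) : C := (x%:C)%C.

Definition is_state (rho : Mx) : Prop :=
  rho \is hermsymmx /\
  (forall v : 'rV[C]_m, 0 <= (v *m rho *m v ^t*) 0 0) /\
  \tr rho = 1.

(* functional calculus f(A) for a Hermitian (normal) matrix A, via the
   library's spectral decomposition A = P^-1 diag(lambda) P, P unitary *)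
Definition fcalc (A : Mx) (f : R -> R) : Mx :=
  invmx (spectralmx A)
  *m diag_mx (\row_i rC (f (complex.Re (spectral_diag A 0 i))))
  *m spectralmx A.

Definition gibbs (H : Mx) (beta : R) : Mx :=
  let E := fcalc H (fun x => expR (- (beta * x))) in (\tr E)^-1 *: E.

Definition mxpowR (A : Mx) (s : R) : Mx := fcalc A (fun x => powR x s).

Definition trace_norm (X : Mx) : R :=
  \sum_i Num.sqrt (complex.Re (spectral_diag (X ^t* *m X) 0 i)).

Definition kraus (J : finType) (K : J -> Mx) (X : Mx) : Mx :=
  \sum_j (K j *m X *m (K j) ^t*).
Definition kraus_adj (J : finType) (K : J -> Mx) (X : Mx) : Mx :=
  \sum_j ((K j) ^t* *m X *m K j).

Definition is_channel (J : finType) (K : J -> Mx) : Prop :=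
  \sum_j ((K j) ^t* *m K j) = 1%:M.

Definition sinner (rho : Mx) (s : R) (A B : Mx) : C :=
  \tr (A ^t* *m mxpowR rho (1 - s) *m B *m mxpowR rho s).

Definition detailed_balance (rho : Mx) (s : R) (J : finType) (K : J -> Mx)
  : Prop :=
  forall A B : Mx,
    sinner rho s A (kraus_adj K B) = sinner rho s (kraus_adj K A) B.

(* measurement M with Kraus operators O_i and real outcome labels u i *)
Section Measurement.
Variables (I : finType) (u : I -> R) (O : I -> Mx).

Definition outcome_prob (i : I) (X : Mx) : R :=
  complex.Re (\tr (O i *m X *m (O i) ^t*)).

Definition mexpect (rho : Mx) : R := \sum_i u i * outcome_prob i rho.

Definition mvariance (rho : Mx) : R :=
  \sum_i (u i - mexpect rho) ^+ 2 * outcome_prob i rho.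

Definition mhat (rho : Mx) (X : Mx) : Mx :=
  \sum_i (rC (u i - mexpect rho) *: (O i *m X *m (O i) ^t*)).

Variables (J : finType) (Kn : J -> Mx).

Definition Ech (X : Mx) : Mx := kraus O (kraus Kn (kraus O X)).
Definition Ehat (rho : Mx) (X : Mx) : Mx := kraus O (kraus Kn (mhat rho X)).

Definition corr (rho : Mx) (t : nat) : R :=
  complex.Re (\tr (Ehat rho (iter t Ech (Ehat rho rho)))).

Definition Cnorm (rho : Mx) (t : nat) : R := corr rho t / mvariance rho.

Definition t_aut (rho : Mx) (K : nat) : R :=
  2^-1 + \sum_(1 <= t < K.+1) ((1 - t%:R / K%:R) * Cnorm rho t.-1).

(* one round of the trajectory with recorded outcome i:
   apply M (outcome i), then N, then M (outcome discarded) *)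
Definition step (i : I) (X : Mx) : Mx := kraus O (kraus Kn (O i *m X *m (O i) ^t*)).

(* unnormalised post-state after recording the outcome sequence s *)
Definition traj (s : seq I) (X : Mx) : Mx := foldl (fun Y i => step i Y) X s.

Definition traj_dev_prob (rhob rho : Mx) (Tburn K : nat) (eps : R) : R :=
  \sum_(e : K.-tuple I |
          eps <= `| K%:R^-1 * (\sum_(t < K) u (tnth e t)) - mexpect rhob |)
    complex.Re (\tr (traj e (iter Tburn (kraus Kn) rho))).

End Measurement.

Definition mixes_by (J : finType) (Kn : J -> Mx) (rhob : Mx) (eta : R)
  (t : nat) : Prop :=
  forall sigma : Mx, is_state sigma ->
    trace_norm (iter t (kraus Kn) sigma - rhob) <= eta.

Definition is_tmix (J : finType) (Kn : J -> Mx) (rhob : Mx) (eta : R)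
  (T : nat) : Prop :=
  mixes_by Kn rhob eta T /\ (forall t, (t < T)%N -> ~ mixes_by Kn rhob eta t).

End Quantum.

(* Main.v *)
Require Import Defs.
From HB Require Import structures.
From mathcomp Require Import all_boot all_order all_algebra.
From mathcomp Require Import complex.
From mathcomp Require Import reals sequences exp.
From mathcomp Require Import ring lra.
Import Order.TTheory GRing.Theory Num.Theory.
Set Implicit Arguments.
Unset Strict Implicit.
Unset Printing Implicit Defensive.
Local Open Scope ring_scope.
Local Open Scope sesquilinear_scope.



Section Basics.
Variable R : realType.
Local Notation C := R[i].
Variable m : nat.
Local Notation Mx := 'M[C]_m.

Lemma ctM p q r (A : 'M[C]_(p,q)) (B : 'M[C]_(q,r)) :
  (A *m B)^t* = B^t* *m A^t*.
Proof. by rewrite trmx_mul map_mxM. Qed.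

Lemma ctD p q (A B : 'M[C]_(p,q)) : (A + B)^t* = A^t* + B^t*.
Proof. by apply/matrixP => i j; rewrite !mxE rmorphD. Qed.

Lemma ctN p q (A : 'M[C]_(p,q)) : (- A)^t* = - A^t*.
Proof. by apply/matrixP => i j; rewrite !mxE rmorphN. Qed.

Lemma ctZ p q (a : C) (A : 'M[C]_(p,q)) : (a *: A)^t* = a^* *: A^t*.
Proof. by apply/matrixP => i j; rewrite !mxE rmorphM. Qed.

Lemma ct0 p q : (0 : 'M[C]_(p,q))^t* = 0.
Proof. by apply/matrixP => i j; rewrite !mxE rmorph0. Qed.

Lemma ct1 : (1%:M : Mx)^t* = 1%:M.
Proof. by rewrite trmx1 map_mx1. Qed.

Lemma ct_sum (I : Type) (r : seq I) (P : pred I) (F : I -> Mx) :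
  (\sum_(i <- r | P i) F i)^t* = \sum_(i <- r | P i) (F i)^t*.
Proof.
elim/big_rec2: _ => [|i x y _ <-]; first by rewrite ct0.
by rewrite ctD.
Qed.

Lemma rC_conj (x : R) : (rC x)^* = rC x.
Proof. exact: (conjc_real x). Qed.

Lemma conj_real (z : C) : z^* = z -> z = rC (complex.Re z).
Proof.
case: z => a b /= [] h; rewrite /rC; congr Complex.
by have: b = 0 by lra.
Qed.

Lemma ReD (x y : C) : complex.Re (x + y) = complex.Re x + complex.Re y.
Proof. by case: x; case: y. Qed.

Lemma Re0 : complex.Re (0 : C) = 0. Proof. by []. Qed.

Lemma Re_sum (I : Type) (r : seq I) (P : pred I) (F : I -> C) :
  complex.Re (\sum_(i <- r | P i) F i) = \sum_(i <- r | P i) complex.Re (F i).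
Proof. exact: (big_morph _ ReD Re0). Qed.

Lemma ReM_rC (c : R) (z : C) : complex.Re (rC c * z) = c * complex.Re z.
Proof. by case: z => a b /=; rewrite mul0r subr0. Qed.

Lemma Re_rC (c : R) : complex.Re (rC c) = c. Proof. by []. Qed.

Lemma rCM (x y : R) : rC x * rC y = rC (x * y).
Proof. by rewrite /rC -rmorphM. Qed.

Lemma rC_ge0 (x : R) : (0 <= rC x) = (0 <= x).
Proof. by rewrite /rC ler0c. Qed.

Lemma ge0_real (z : C) : 0 <= z -> z = rC (complex.Re z) /\ 0 <= complex.Re z.
Proof.
rewrite lecE /= => /andP[/eqP h1 h2]; split => //.
by case: z h1 h2 => a b /= -> _.
Qed.

Lemma tr_sum (I : Type) (r : seq I) (P : pred I) (F : I -> Mx) :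
  \tr (\sum_(i <- r | P i) F i) = \sum_(i <- r | P i) \tr (F i).
Proof. exact: (big_morph _ (@mxtraceD _ m) (mxtrace0 _ _)). Qed.

Definition psd (X : Mx) := forall v : 'rV[C]_m, 0 <= (v *m X *m v^t*) 0 0.
Definition herm (X : Mx) := X^t* = X.

Lemma psd_conj (A X : Mx) : psd X -> psd (A *m X *m A^t*).
Proof.
move=> hX v; have := hX (v *m A).
by rewrite ctM !mulmxA.
Qed.

Lemma psdD X Y : psd X -> psd Y -> psd (X + Y).
Proof.
move=> hX hY v; rewrite mulmxDr mulmxDl mxE.
exact: addr_ge0.
Qed.

Lemma psd0 : psd 0.
Proof. by move=> v; rewrite mulmx0 mul0mx mxE. Qed.

Lemma psd_sum (I : Type) (r : seq I) (P : pred I) (F : I -> Mx) :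
  (forall i, P i -> psd (F i)) -> psd (\sum_(i <- r | P i) F i).
Proof. by move=> h; apply: (big_ind psd) => //; [exact: psd0|exact: psdD]. Qed.

Lemma psdZ (a : C) X : 0 <= a -> psd X -> psd (a *: X).
Proof.
move=> ha hX v; rewrite -scalemxAr -scalemxAl mxE.
exact: mulr_ge0.
Qed.

Lemma psd_rank1 (c : 'cV[C]_m) : psd (c *m c^t*).
Proof.
move=> v; rewrite !mulmxA -[v *m c *m c^t* *m v^t*]mulmxA -ctM.
rewrite mxE big_ord1 !mxE.
exact: mul_conjC_ge0.
Qed.

Lemma adj_delta (i : 'I_m) : (delta_mx 0 i : 'rV[C]_m)^t* = delta_mx i 0.
Proof.
apply/matrixP => a b; rewrite !mxE conjC_nat.
by rewrite andbC.
Qed.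

Lemma psd_tr X : psd X -> 0 <= \tr X.
Proof.
move=> hX; rewrite /mxtrace; apply: sumr_ge0 => i _.
have := hX (delta_mx 0 i).
rewrite -rowE adj_delta -colE.
by rewrite !mxE.
Qed.

Lemma psd_Retr X : psd X -> 0 <= complex.Re (\tr X).
Proof. by move/psd_tr/ge0_real => []. Qed.

Lemma herm_hermsym X : herm X -> X \is hermsymmx.
Proof. by move=> h; apply/is_hermitianmxP; rewrite expr0 scale1r h. Qed.

Lemma hermsym_herm X : X \is hermsymmx -> herm X.
Proof. by move/is_hermitianmxP; rewrite expr0 scale1r /herm => <-. Qed.

Definition linmap (f : Mx -> Mx) :=
  forall (a : C) (X Y : Mx), f (a *: X + Y) = a *: f X + f Y.

Section Lin.
Variable f : Mx -> Mx.
Hypothesis hf : linmap f.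
Lemma lin0 : f 0 = 0.
Proof.
have := hf 1 0 0; rewrite scaler0 add0r scale1r => /eqP.
by rewrite -subr_eq addrN eq_sym => /eqP.
Qed.
Lemma linD X Y : f (X + Y) = f X + f Y.
Proof. by have := hf 1 X Y; rewrite !scale1r. Qed.
Lemma linZ a X : f (a *: X) = a *: f X.
Proof. by have := hf a X 0; rewrite !addr0 lin0 addr0. Qed.
Lemma linB X Y : f (X - Y) = f X - f Y.
Proof. by have := hf (-1) Y X; rewrite !scaleN1r addrC => ->; rewrite addrC. Qed.
Lemma lin_sum (I : Type) (r : seq I) (P : pred I) (F : I -> Mx) :
  f (\sum_(i <- r | P i) F i) = \sum_(i <- r | P i) f (F i).
Proof. exact: (big_morph _ linD lin0). Qed.
End Lin.

Lemma linmap_comp f g : linmap f -> linmap g -> linmap (fun X => f (g X)).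
Proof. by move=> hf hg a X Y; rewrite hg hf. Qed.

Lemma linmap_sand (A : Mx) : linmap (fun X => A *m X *m A^t*).
Proof. by move=> a X Y; rewrite mulmxDr mulmxDl -scalemxAr -scalemxAl. Qed.

Lemma linmap_kraus (J : finType) (K : J -> Mx) : linmap (kraus K).
Proof.
move=> a X Y; rewrite /kraus scaler_sumr -big_split; apply: eq_bigr => j _.
exact: linmap_sand.
Qed.

Lemma linmap_id : linmap id. Proof. by []. Qed.

Lemma linmap_iter f k : linmap f -> linmap (iter k f).
Proof.
move=> hf; elim: k => [|k IH] // a X Y /=.
by rewrite IH hf.
Qed.

Lemma psd_kraus (J : finType) (K : J -> Mx) X : psd X -> psd (kraus K X).
Proof. by move=> hX; apply: psd_sum => j _; exact: psd_conj. Qed.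

Lemma herm_sand (A X : Mx) : herm X -> herm (A *m X *m A^t*).
Proof. by rewrite /herm !ctM trmxCK mulmxA => ->. Qed.

Lemma herm_kraus (J : finType) (K : J -> Mx) X : herm X -> herm (kraus K X).
Proof.
by move=> hX; rewrite /herm /kraus ct_sum; apply: eq_bigr => j _; exact: herm_sand.
Qed.

Lemma tr_sand (A X : Mx) : \tr (A *m X *m A^t*) = \tr (A^t* *m A *m X).
Proof. by rewrite mxtrace_mulC mulmxA. Qed.

Lemma tr_kraus (J : finType) (K : J -> Mx) X :
  is_channel K -> \tr (kraus K X) = \tr X.
Proof.
move=> hK; rewrite /kraus tr_sum.
under eq_bigr => j _ do rewrite tr_sand.
by rewrite -tr_sum -mulmx_suml hK mul1mx.
Qed.

Lemma kraus_adj1 (J : finType) (K : J -> Mx) :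
  is_channel K -> kraus_adj K 1%:M = 1%:M.
Proof.
move=> hK; rewrite /kraus_adj -[in RHS]hK; apply: eq_bigr => j _.
by rewrite mulmx1.
Qed.

End Basics.



Section Tuples.
Variables (R : realType) (I : finType).

Lemma sum_tupleS k (F : seq I -> R) :
  \sum_(e : k.+1.-tuple I) F e = \sum_(i : I) \sum_(e : k.-tuple I) F (i :: e).
Proof.
rewrite pair_bigA /=.
rewrite (reindex (fun p : I * k.-tuple I => cons_tuple p.1 p.2)) //=.
exists (fun e : k.+1.-tuple I => (thead e, behead_tuple e)).
  by case=> i e _ /=; congr pair; apply: val_inj.
by move=> e _ /=; rewrite [in RHS](tuple_eta e); apply: val_inj.
Qed.

Lemma sum_tuple0 (F : seq I -> R) : \sum_(e : 0.-tuple I) F e = F [::].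
Proof.
rewrite (big_pred1 [tuple]) //.
by move=> e; apply/esym/eqP; exact: tuple0.
Qed.

End Tuples.

Section Traj.
Variables (R : realType) (m : nat) (I J : finType) (u : I -> R).
Local Notation C := R[i].
Local Notation Mx := 'M[C]_m.
Variables (O : I -> Mx) (Kn : J -> Mx).
Hypotheses (chO : is_channel O) (chN : is_channel Kn).

Lemma linmap_step i : linmap (step O Kn i).
Proof.
exact: (linmap_comp (linmap_kraus O)
          (linmap_comp (linmap_kraus Kn) (linmap_sand (O i)))).
Qed.

Lemma linmap_traj e : linmap (traj O Kn e).
Proof.
elim: e => [|i e IH]; first exact: linmap_id.
exact: (linmap_comp IH (linmap_step i)).
Qed.

Lemma psd_step i X : psd X -> psd (step O Kn i X).
Proof. by move=> h; apply: psd_kraus; apply: psd_kraus; apply: psd_conj. Qed.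

Lemma psd_traj e X : psd X -> psd (traj O Kn e X).
Proof.
elim: e X => [|i e IH] X h //=.
exact/IH/psd_step.
Qed.

Definition T e X := complex.Re (\tr (traj O Kn e X)).

Lemma T_sumZ e (Ix : Type) (r : seq Ix) (P : pred Ix) (c : Ix -> R) (Y : Ix -> Mx) :
  T e (\sum_(i <- r | P i) rC (c i) *: Y i) = \sum_(i <- r | P i) c i * T e (Y i).
Proof.
rewrite /T (lin_sum (linmap_traj e)) tr_sum Re_sum; apply: eq_bigr => i _.
by rewrite (linZ (linmap_traj e)) mxtraceZ ReM_rC.
Qed.

Lemma T_add e X Y : T e (X + Y) = T e X + T e Y.
Proof. by rewrite /T (linD (linmap_traj e)) mxtraceD ReD. Qed.

Lemma T_sum e (Ix : Type) (r : seq Ix) (P : pred Ix) (Y : Ix -> Mx) :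
  T e (\sum_(i <- r | P i) Y i) = \sum_(i <- r | P i) T e (Y i).
Proof. by rewrite /T (lin_sum (linmap_traj e)) tr_sum Re_sum. Qed.

Lemma T_ge0 e X : psd X -> 0 <= T e X.
Proof. by move=> h; apply/psd_Retr/psd_traj. Qed.

Lemma T_nil X : T [::] X = complex.Re (\tr X).
Proof. by []. Qed.

Lemma tr_step i X : \tr (step O Kn i X) = \tr (O i *m X *m (O i)^t*).
Proof. by rewrite /step !tr_kraus. Qed.

Lemma step_sum X : \sum_i step O Kn i X = Ech O Kn X.
Proof.
rewrite /Ech.
have -> : kraus O X = \sum_i (O i *m X *m (O i)^t*) by [].
by rewrite (lin_sum (linmap_kraus Kn)) (lin_sum (linmap_kraus O)).
Qed.

Lemma T_step_sum e X : \sum_i T e (step O Kn i X) = T e (Ech O Kn X).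
Proof. by rewrite -step_sum T_sum. Qed.

Lemma claim1 k X : \sum_(e : k.-tuple I) T e X = complex.Re (\tr X).
Proof.
elim: k X => [|k IH] X; first by rewrite (sum_tuple0 (fun e => T e X)).
rewrite (sum_tupleS _ (fun e => T e X)).
transitivity (\sum_i complex.Re (\tr (step O Kn i X))).
  by apply: eq_bigr => i _; exact: IH.
rewrite -Re_sum; congr complex.Re.
rewrite -[in RHS](tr_kraus X chO) /kraus tr_sum; apply: eq_bigr => i _.
exact: tr_step.
Qed.

Variable rb : Mx.
Local Notation d i := (u i - mexpect u O rb).
Local Notation Dm := (Ehat u O Kn rb).
Local Notation S := (Ech O Kn).

Definition sdev (e : seq I) := \sum_(x <- e) d x.

Lemma Dm_sum X : Dm X = \sum_i rC (d i) *: step O Kn i X.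
Proof.
rewrite /Ehat /mhat (lin_sum (linmap_kraus Kn)) (lin_sum (linmap_kraus O)).
apply: eq_bigr => i _.
by rewrite (linZ (linmap_kraus Kn)) (linZ (linmap_kraus O)).
Qed.

Lemma T_Dm e X : T e (Dm X) = \sum_i d i * T e (step O Kn i X).
Proof. by rewrite Dm_sum T_sumZ. Qed.

Lemma claim2 k X : \sum_(e : k.-tuple I) sdev e * T e X =
  \sum_(j < k) complex.Re (\tr (Dm (iter j S X))).
Proof.
elim: k X => [|k IH] X.
  by rewrite (sum_tuple0 (fun e => sdev e * T e X)) big_ord0 /sdev big_nil mul0r.
rewrite (sum_tupleS _ (fun e => sdev e * T e X)) big_ord_recl /=.
transitivity (\sum_i \sum_(e : k.-tuple I)
   (d i * T e (step O Kn i X) + sdev e * T e (step O Kn i X))).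
  apply: eq_bigr => i _; apply: eq_bigr => e _.
  by rewrite /sdev big_cons mulrDl.
rewrite (eq_bigr (fun i => d i * complex.Re (\tr (step O Kn i X)) +
            \sum_(e : k.-tuple I) sdev e * T e (step O Kn i X))); last first.
  by move=> i _; rewrite big_split /= -mulr_sumr claim1.
rewrite big_split /=; congr (_ + _).
  by rewrite -T_nil T_Dm.
rewrite exchange_big /=.
under eq_bigr => e _ do rewrite -mulr_sumr T_step_sum.
rewrite IH; apply: eq_bigr => j _.
by rewrite -iterSr.
Qed.

Hypothesis fixS : S rb = rb.

Lemma claim3 k : \sum_(e : k.-tuple I) sdev e ^+ 2 * T e rb =
  k%:R * mvariance u O rb +
  2 * \sum_(k' < k) \sum_(j < k') corr u O Kn rb j.
Proof.
elim: k => [|k IH].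
  by rewrite (sum_tuple0 (fun e => sdev e ^+ 2 * T e rb)) big_ord0 /sdev big_nil expr0n /= !mul0r mulr0 addr0.
rewrite (sum_tupleS _ (fun e => sdev e ^+ 2 * T e rb)).
transitivity (\sum_i \sum_(e : k.-tuple I)
   (d i ^+ 2 * T e (step O Kn i rb) + 2 * (d i * (sdev e * T e (step O Kn i rb)))
    + sdev e ^+ 2 * T e (step O Kn i rb))).
  apply: eq_bigr => i _; apply: eq_bigr => e _.
  rewrite /sdev big_cons; ring.
rewrite (eq_bigr (fun i => d i ^+ 2 * complex.Re (\tr (step O Kn i rb)) +
    2 * (d i * \sum_(e : k.-tuple I) sdev e * T e (step O Kn i rb)) +
    \sum_(e : k.-tuple I) sdev e ^+ 2 * T e (step O Kn i rb))); last first.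
  move=> i _; rewrite !big_split /= -mulr_sumr claim1.
  by rewrite -!mulr_sumr.
rewrite !big_split /=.
have -> : \sum_i d i ^+ 2 * complex.Re (\tr (step O Kn i rb)) = mvariance u O rb.
  by apply: eq_bigr => i _; rewrite tr_step.
have -> : \sum_i 2 * (d i * \sum_(e : k.-tuple I) sdev e * T e (step O Kn i rb))
    = 2 * \sum_(j < k) corr u O Kn rb j.
  rewrite -mulr_sumr; congr (2 * _).
  rewrite -(claim2 k (Dm rb)).
  under eq_bigr => i _ do rewrite mulr_sumr.
  rewrite exchange_big /=; apply: eq_bigr => e _.
  rewrite T_Dm mulr_sumr; apply: eq_bigr => i _; ring.
have -> : \sum_i \sum_(e : k.-tuple I) sdev e ^+ 2 * T e (step O Kn i rb)
    = \sum_(e : k.-tuple I) sdev e ^+ 2 * T e rb.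
  rewrite exchange_big /=; apply: eq_bigr => e _.
  by rewrite -mulr_sumr T_step_sum fixS.
rewrite IH big_ord_recr /= -natr1; ring.
Qed.

End Traj.



Section Spec.
Variable R : realType.
Local Notation C := R[i].
Variable m : nat.
Local Notation Mx := 'M[C]_m.

Definition Pj (W : Mx) (j : 'I_m) : Mx := col j (W^t*) *m (col j (W^t*))^t*.

Lemma col_adj (W : Mx) j : col j (W^t*) = (row j W)^t*.
Proof. by apply/matrixP => a b; rewrite !mxE. Qed.

Lemma row_adj (W : Mx) j : row j W = (col j (W^t*))^t*.
Proof. by apply/matrixP => a b; rewrite !mxE conjCK. Qed.

Lemma mul_diag_sum (A B : Mx) (d : 'rV[C]_m) :
  A *m diag_mx d *m B = \sum_j d 0 j *: (col j A *m row j B).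
Proof.
apply/matrixP => a b; rewrite mul_mx_diag mxE summxE; apply: eq_bigr => j _.
rewrite !mxE big_ord1 !mxE; ring.
Qed.

Lemma unit_diag_sum (W : Mx) (d : 'rV[C]_m) : W \is unitarymx ->
  invmx W *m diag_mx d *m W = \sum_j d 0 j *: Pj W j.
Proof.
move=> hW; rewrite invmx_unitary // mul_diag_sum; apply: eq_bigr => j _.
by rewrite /Pj -row_adj.
Qed.

Lemma psd_Pj W j : psd (Pj W j).
Proof. exact: psd_rank1. Qed.

Lemma herm_Pj W j : herm (Pj W j).
Proof. by rewrite /herm /Pj ctM trmxCK. Qed.

Lemma psd_sumP (W : Mx) (r : 'I_m -> R) : (forall j, 0 <= r j) ->
  psd (\sum_j rC (r j) *: Pj W j).
Proof.
by move=> h; apply: psd_sum => j _; apply: psdZ; [rewrite rC_ge0|exact: psd_Pj].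
Qed.

Lemma herm_sumP (W : Mx) (r : 'I_m -> R) : herm (\sum_j rC (r j) *: Pj W j).
Proof.
rewrite /herm ct_sum; apply: eq_bigr => j _.
by rewrite ctZ rC_conj herm_Pj.
Qed.

Lemma tr_Pj (W : Mx) j : W \is unitarymx -> \tr (Pj W j) = 1.
Proof.
move/unitarymxP => hW; rewrite /Pj mxtrace_mulC /mxtrace big_ord1.
have := congr1 (fun M : Mx => M j j) hW; rewrite [in RHS]mxE eqxx mulr1n => <-.
rewrite !mxE; apply: eq_bigr => k _; rewrite !mxE conjCK.
by [].
Qed.

Lemma fcalc_sum (A : Mx) f : fcalc A f =
  \sum_j rC (f (complex.Re (spectral_diag A 0 j))) *: Pj (spectralmx A) j.
Proof.
rewrite /fcalc unit_diag_sum ?spectral_unitarymx //; apply: eq_bigr => j _.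
by rewrite mxE.
Qed.

Lemma tr_sumP (W : Mx) (r : 'I_m -> R) : W \is unitarymx ->
  \tr (\sum_j rC (r j) *: Pj W j) = rC (\sum_j r j).
Proof.
move=> hW; rewrite tr_sum /rC rmorph_sum; apply: eq_bigr => j _.
by rewrite mxtraceZ tr_Pj // mulr1.
Qed.

Lemma gibbs_sum (H : Mx) (beta : R) : gibbs H beta =
  \sum_j rC ((\sum_k expR (- (beta * complex.Re (spectral_diag H 0 k))))^-1 *
              expR (- (beta * complex.Re (spectral_diag H 0 j))))
         *: Pj (spectralmx H) j.
Proof.
rewrite /gibbs fcalc_sum tr_sumP ?spectral_unitarymx // scaler_sumr.
apply: eq_bigr => j _; rewrite scalerA; congr (_ *: _).
by rewrite /rC rmorphM fmorphV.
Qed.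

Lemma psd_gibbs (H : Mx) (beta : R) : psd (gibbs H beta).
Proof.
rewrite gibbs_sum; apply: psd_sumP => j.
apply: mulr_ge0; last exact: expR_ge0.
by rewrite invr_ge0; apply: sumr_ge0 => k _; exact: expR_ge0.
Qed.

Lemma herm_gibbs (H : Mx) (beta : R) : herm (gibbs H beta).
Proof. by rewrite gibbs_sum; exact: herm_sumP. Qed.

Lemma quad_row (V M : Mx) j :
  (row j V *m M *m (row j V)^t*) 0 0 = (V *m M *m V^t*) j j.
Proof.
rewrite -row_mul -col_adj !mxE; apply: eq_bigr => k _.
by rewrite !mxE.
Qed.

Lemma diag_spec (A : Mx) : A \is normalmx ->
  diag_mx (spectral_diag A) = spectralmx A *m A *m (spectralmx A)^t*.
Proof.
move=> hA; have hV := spectral_unitarymx A.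
move/unitarymxP: (hV) => hVV.
have hA' := orthomx_spectralP hA.
rewrite [X in _ = _ *m X *m _]hA' invmx_unitary //.
by rewrite !mulmxA hVV mul1mx -mulmxA hVV mulmx1.
Qed.

Lemma eig_quad (A : Mx) j : A \is normalmx ->
  spectral_diag A 0 j =
  (row j (spectralmx A) *m A *m (row j (spectralmx A))^t*) 0 0.
Proof.
move=> hA; rewrite quad_row -diag_spec //.
by rewrite mxE eqxx mulr1n.
Qed.

Lemma quad_conj (w : 'rV[C]_m) (A : Mx) : herm A ->
  ((w *m A *m w^t*) 0 0)^* = (w *m A *m w^t*) 0 0.
Proof.
move=> hA.
have -> : ((w *m A *m w^t*) 0 0)^* = ((w *m A *m w^t*)^t*) 0 0 by rewrite !mxE.
by rewrite !ctM trmxCK hA mulmxA.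
Qed.

Lemma herm_normal (A : Mx) : herm A -> A \is normalmx.
Proof. by move/herm_hermsym; exact: hermitian_normalmx. Qed.

Lemma herm_eig_real (A : Mx) j : herm A ->
  spectral_diag A 0 j = rC (complex.Re (spectral_diag A 0 j)).
Proof.
move=> hA; apply: conj_real; rewrite eig_quad ?herm_normal //.
exact: quad_conj.
Qed.

Lemma psd_eig (A : Mx) j : psd A -> A \is normalmx -> 0 <= spectral_diag A 0 j.
Proof. by move=> hA hN; rewrite eig_quad //; exact: hA. Qed.

Lemma powR_prod (x s : R) : 0 <= x -> powR x s * powR x (1 - s) = x.
Proof.
rewrite le_eqVlt => /orP[/eqP <-|hx].
  rewrite /powR eqxx; case: eqP => [->|_]; last by rewrite mul0r.
  by rewrite subr0 oner_eq0 mulr0.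
rewrite -powRD; last by apply/implyP => _; rewrite gt_eqF.
have -> : s + (1 - s) = 1 by ring.
by rewrite powRr1 // ltW.
Qed.

Lemma mxpow_prod (A : Mx) s : psd A -> herm A ->
  mxpowR A s *m mxpowR A (1 - s) = A.
Proof.
move=> hP hH; have hN := herm_normal hH.
have hU := spectral_unit A.
rewrite /mxpowR /fcalc.
set V := spectralmx A.
set D1 := diag_mx _; set D2 := diag_mx _.
rewrite -!mulmxA [V *m (invmx V *m _)]mulmxA mulmxV // mul1mx.
rewrite [D1 *m _]mulmxA /D1 /D2 mulmx_diag mulmxA.
rewrite [RHS](orthomx_spectralP hN); congr (_ *m _ *m _); congr diag_mx.
apply/rowP => j; rewrite !mxE rCM.
have [h1 h2] := ge0_real (psd_eig j hP hN).
by rewrite powR_prod // -h1.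
Qed.

End Spec.



Section Spec2.
Variable R : realType.
Local Notation C := R[i].
Variable m : nat.
Local Notation Mx := 'M[C]_m.
Lemma tr_delta (Z : Mx) i j : \tr (Z *m delta_mx j i) = Z i j.
Proof.
rewrite mxtrace_mulC /mxtrace (bigD1 j) //= big1 => [|k hk].
  rewrite mxE (bigD1 i) //= big1 => [|l hl].
    by rewrite !mxE !eqxx mul1r !addr0.
  by rewrite mxE (negbTE hl) andbF mul0r.
by rewrite mxE big1 // => l _; rewrite mxE (negbTE hk) mul0r.
Qed.

Lemma tr_ext (Z1 Z2 : Mx) : (forall B, \tr (Z1 *m B) = \tr (Z2 *m B)) -> Z1 = Z2.
Proof.
move=> h; apply/matrixP => i j.
by have := h (delta_mx j i); rewrite !tr_delta.
Qed.

Lemma tr_kraus_adj (J : finType) (K : J -> Mx) (Q B : Mx) :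
  \tr (Q *m kraus_adj K B) = \tr (kraus K Q *m B).
Proof.
rewrite /kraus_adj /kraus mulmx_sumr mulmx_suml !tr_sum; apply: eq_bigr => j _.
by rewrite !mulmxA mxtrace_mulC !mulmxA.
Qed.

Lemma db_fixed_gen (J : finType) (K : J -> Mx) (P1 P2 : Mx) :
  is_channel K ->
  (forall A B, \tr (A^t* *m P1 *m kraus_adj K B *m P2) =
               \tr ((kraus_adj K A)^t* *m P1 *m B *m P2)) ->
  kraus K (P2 *m P1) = P2 *m P1.
Proof.
move=> hK hdb; apply: tr_ext => B.
rewrite -tr_kraus_adj.
have e Y : \tr (P1 *m Y *m P2) = \tr (P2 *m P1 *m Y).
  by rewrite mxtrace_mulC mulmxA.
by have := hdb 1%:M B; rewrite (kraus_adj1 hK) ct1 !mul1mx !e.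
Qed.

Lemma db_fixed (rho : Mx) s (J : finType) (K : J -> Mx) :
  is_channel K -> detailed_balance rho s K ->
  kraus K (mxpowR rho s *m mxpowR rho (1 - s)) = mxpowR rho s *m mxpowR rho (1 - s).
Proof. by move=> hK hdb; apply: db_fixed_gen. Qed.

Lemma char_poly_conjV (P A : Mx) : P \in unitmx ->
  char_poly (invmx P *m A *m P) = char_poly A.
Proof.
move=> hP; rewrite /char_poly /char_poly_mx.
set Q := map_mx polyC P; set Qi := map_mx polyC (invmx P).
have hQ : Qi *m Q = 1%:M by rewrite -map_mxM mulVmx // map_mx1.
have -> : 'X%:M - map_mx polyC (invmx P *m A *m P) =
          Qi *m ('X%:M - map_mx polyC A) *m Q.
  rewrite !map_mxM mulmxBr mulmxBl -/Q -/Qi; congr (_ - _).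
  by rewrite scalar_mxC -mulmxA hQ mulmx1.
by rewrite !det_mulmx mulrAC -det_mulmx hQ det1 mul1r.
Qed.

Lemma char_poly_diag (d : 'rV[C]_m) :
  char_poly (diag_mx d) = \prod_(i < m) ('X - (d 0 i)%:P).
Proof.
rewrite char_poly_trig ?diag_mx_is_trig //; apply: eq_bigr => i _.
by rewrite mxE eqxx mulr1n.
Qed.

Lemma tnorm_herm (X : Mx) : herm X ->
  trace_norm X = \sum_j `|complex.Re (spectral_diag X 0 j)|.
Proof.
move=> hX; have hN := herm_normal hX.
set V := spectralmx X; set l := spectral_diag X.
have hV : V \in unitmx := spectral_unit X.
have hXX : X^t* *m X = invmx V *m diag_mx (\row_j (l 0 j * l 0 j)) *m V.
  rewrite hX {1 2}(orthomx_spectralP hN) -/V -/l.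
  rewrite -!mulmxA [V *m (invmx V *m _)]mulmxA mulmxV // mul1mx.
  by rewrite [diag_mx l *m (diag_mx l *m V)]mulmxA mulmx_diag mulmxA.
have hN2 : X^t* *m X \is normalmx.
  by apply: herm_normal; rewrite /herm ctM trmxCK.
set W := spectralmx (X^t* *m X); set mu := spectral_diag (X^t* *m X).
have hcp : \prod_(i < m) ('X - (mu 0 i)%:P) =
           \prod_(i < m) ('X - (l 0 i * l 0 i)%:P).
  rewrite -char_poly_diag.
  rewrite -(char_poly_conjV _ (spectral_unit (X^t* *m X))) -/W -/mu.
  rewrite -(orthomx_spectralP hN2) hXX char_poly_conjV // char_poly_diag.
  by apply: eq_bigr => i _; rewrite mxE.
move: hcp.
rewrite -(big_map (fun i => mu 0 i) xpredT (fun x => 'X - x%:P)).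
rewrite -(big_map (fun i => l 0 i * l 0 i) xpredT (fun x => 'X - x%:P)).
move/prod_XsubC_eq => hperm.
rewrite /trace_norm -/mu.
rewrite -(big_map (fun i => mu 0 i) xpredT (fun x => Num.sqrt (complex.Re x))).
rewrite (perm_big _ hperm) big_map; apply: eq_bigr => j _.
rewrite [l 0 j](herm_eig_real j hX) rCM Re_rC -expr2.
exact: sqrtr_sqr.
Qed.

End Spec2.



Section Burn.
Variables (R : realType) (m : nat) (I J : finType).
Local Notation C := R[i].
Local Notation Mx := 'M[C]_m.
Variables (O : I -> Mx) (Kn : J -> Mx).
Hypotheses (chO : is_channel O) (chN : is_channel Kn).

Lemma sum_filter_le k (P : pred (k.-tuple I)) (F : k.-tuple I -> R) :
  (forall e, 0 <= F e) -> \sum_(e | P e) F e <= \sum_e F e.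
Proof. by move=> h; rewrite [X in _ <= X](bigID P) /= lerDl sumr_ge0. Qed.

Lemma burn k (P : pred (k.-tuple I)) (X : Mx) : herm X ->
  \sum_(e : k.-tuple I | P e) T O Kn e X <= trace_norm X.
Proof.
move=> hX; rewrite tnorm_herm //.
have hXs : X = \sum_j rC (complex.Re (spectral_diag X 0 j)) *: Pj (spectralmx X) j.
  rewrite {1}(orthomx_spectralP (herm_normal hX)) unit_diag_sum ?spectral_unitarymx //.
  by apply: eq_bigr => j _; rewrite [in LHS](herm_eig_real j hX).
have hT e : T O Kn e X = \sum_j complex.Re (spectral_diag X 0 j) *
                               T O Kn e (Pj (spectralmx X) j).
  by rewrite {1}hXs T_sumZ.
under eq_bigr => e _ do rewrite hT.
rewrite exchange_big /=.
apply: ler_sum => j _; rewrite -mulr_sumr.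
set a := complex.Re _.
set p := \sum_(e | P e) _.
have h0 : 0 <= p by apply: sumr_ge0 => e _; apply: T_ge0; exact: psd_Pj.
have h1 : p <= 1.
  apply: (le_trans (sum_filter_le P _)) => [e|]; first by apply: T_ge0; exact: psd_Pj.
  by rewrite (claim1 chO chN) tr_Pj ?spectral_unitarymx.
apply: (le_trans (ler_norm _)); rewrite normrM (ger0_norm h0).
exact: ler_piMr.
Qed.

End Burn.

Lemma nested (R : realType) (c : nat -> R) K :
  \sum_(k < K) \sum_(j < k) c j = \sum_(1 <= t < K.+1) (K%:R - t%:R) * c t.-1.
Proof.
elim: K => [|K IH]; first by rewrite big_ord0 big_geq.
rewrite big_ord_recr /= IH [RHS]big_nat_recr //= subrr mul0r addr0.
have -> : \sum_(1 <= t < K.+1) (K.+1%:R - t%:R) * c t.-1 =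
   \sum_(1 <= t < K.+1) (K%:R - t%:R) * c t.-1 + \sum_(1 <= t < K.+1) c t.-1.
  rewrite -big_split; apply: eq_bigr => t _ /=; rewrite -natr1; ring.
congr (_ + _).
by rewrite big_add1 /= big_mkord.
Qed.

Theorem lemma5p5 (R : realType) (n : nat) (H : 'M[R[i]]_(2 ^ n))
  (beta s : R) (J I : finType) (Kn : J -> 'M[R[i]]_(2 ^ n))
  (u : I -> R) (O : I -> 'M[R[i]]_(2 ^ n)) (rho : 'M[R[i]]_(2 ^ n))
  (eps eta : R) (Tburn K : nat) :
  H \is hermsymmx -> 0 < beta ->
  is_channel Kn -> is_channel O -> injective u ->
  detailed_balance (gibbs H beta) s Kn ->
  detailed_balance (gibbs H beta) s O ->
  0 < mvariance u O (gibbs H beta) ->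
  is_state rho -> 0 < eps -> 0 < eta ->
  is_tmix Kn (gibbs H beta) eta Tburn ->
  2 * mvariance u O (gibbs H beta) / (eps ^+ 2 * eta)
    * t_aut u O Kn (gibbs H beta) K <= K%:R ->
  traj_dev_prob u O Kn (gibbs H beta) rho Tburn K eps <= 2 * eta.
Proof.
move=> _ _ chN chO _ dbN dbO hV hrho heps heta [hmix _] hK.
set rb := gibbs H beta.
have psdrb : psd rb := psd_gibbs H beta.
have hermrb : herm rb := herm_gibbs H beta.
have prodrb : mxpowR rb s *m mxpowR rb (1 - s) = rb := mxpow_prod s psdrb hermrb.
have fixN : kraus Kn rb = rb by have := db_fixed chN dbN; rewrite prodrb.
have fixO : kraus O rb = rb by have := db_fixed chO dbO; rewrite prodrb.
have fixS : Ech O Kn rb = rb by rewrite /Ech fixO fixN fixO.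
move: hV hK; rewrite -/rb; set V := mvariance u O rb => hV hK.
set ta := t_aut u O Kn rb K.
have Kpos : (0 < K)%N.
  case: K hK @ta => [|K'] // hK' ta.
  exfalso; move: hK'; rewrite /ta /t_aut big_geq // addr0.
  apply/negP; rewrite -ltNge.
  apply: mulr_gt0; last by rewrite invr_gt0.
  by apply: divr_gt0; [apply: mulr_gt0|apply: mulr_gt0 => //; apply: exprn_gt0].
have Kr0 : (K%:R : R) != 0 by rewrite pnatr_eq0 -lt0n.
have Krp : (0 : R) < K%:R by rewrite ltr0n.
have hermit t : herm (iter t (kraus Kn) rho).
  elim: t => [|t IH] /=; first by case: hrho => /hermsym_herm.
  exact: herm_kraus.
set sigma := iter Tburn (kraus Kn) rho.
have hermsig : herm sigma := hermit Tburn.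
rewrite /traj_dev_prob -/sigma.
have hsplit e : complex.Re (\tr (traj O Kn e sigma)) =
                T O Kn e rb + T O Kn e (sigma - rb).
  by rewrite -T_add addrC subrK.
under eq_bigr => e _ do rewrite hsplit.
rewrite big_split /=.
have -> : 2 * eta = eta + eta by ring.
apply: lerD; last first.
  apply: (le_trans _ (hmix rho hrho)); apply: burn => //.
  by rewrite /herm ctD ctN hermsig hermrb.
(* Chebyshev part *)
set E := mexpect u O rb.
have hs (e : K.-tuple I) : K%:R^-1 * (\sum_(t < K) u (tnth e t)) - E =
                           K%:R^-1 * sdev u O rb e.
  rewrite /sdev big_tuple /= sumrB sumr_const card_ord.
  rewrite -[mexpect u O rb *+ K]mulr_natr mulrBr.
  by rewrite mulrCA mulVf // mulr1.
set c := (K%:R^-1 / eps) ^+ 2.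
have key (x : R) (f : nat -> R) : x != 0 ->
    K%:R * x + 2 * \sum_(1 <= t < K.+1) (K%:R - t%:R) * f t =
    2 * K%:R * x * (2^-1 + \sum_(1 <= t < K.+1) (1 - t%:R / K%:R) * (f t / x)).
  move=> hx; rewrite mulrDr [X in _ = _ + X]mulr_sumr [X in _ + X = _]mulr_sumr.
  congr (_ + _); first by field.
  apply: eq_bigr => t _.
  by field; rewrite hx Kr0.
have hW : \sum_(e : K.-tuple I) sdev u O rb e ^+ 2 * T O Kn e rb = 2 * K%:R * V * ta.
  rewrite (claim3 u chO chN fixS) nested /ta /t_aut /Cnorm -/V.
  exact: (key V (fun t => corr u O Kn rb t.-1) (lt0r_neq0 hV)).
apply: (le_trans (y := \sum_(e : K.-tuple I) c * (sdev u O rb e ^+ 2 * T O Kn e rb))).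
  apply: (le_trans (y := \sum_(e : K.-tuple I | eps <= `|K%:R^-1 *
            (\sum_(t < K) u (tnth e t)) - E|) c * (sdev u O rb e ^+ 2 * T O Kn e rb))).
    apply: ler_sum => e; rewrite hs => hA.
    have hT := T_ge0 O Kn e psdrb.
    rewrite mulrA -[X in X <= _]mul1r; apply: ler_wpM2r => //.
    have -> : c * sdev u O rb e ^+ 2 = (`|K%:R^-1 * sdev u O rb e| / eps) ^+ 2.
      by rewrite /c !expr_div_n (real_normK (num_real _)) exprMn mulrAC.
    rewrite expr_ge1 //; last by apply: divr_ge0 => //; exact: ltW.
    by rewrite ler_pdivlMr // mul1r.
  apply: sum_filter_le => e; apply: mulr_ge0; first exact: sqr_ge0.
  by apply: mulr_ge0; [exact: sqr_ge0|exact: T_ge0].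
rewrite -mulr_sumr hW /c.
have -> : (K%:R^-1 / eps) ^+ 2 * (2 * K%:R * V * ta) = (2 * V * ta) / (K%:R * eps ^+ 2).
  by field; rewrite Kr0 /= gt_eqF.
rewrite ler_pdivrMr; last by apply: mulr_gt0 => //; exact: exprn_gt0.
move: hK; rewrite mulrAC ler_pdivrMr; last by apply: mulr_gt0 => //; exact: exprn_gt0.
move=> hK.
apply: (le_trans hK); rewrite mulrCA mulrA; lra.
Qed.
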